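(* Let $\mathcal{A}$ be an $[n_1,k_1,d_1]$ linear code over $\mathbb{F}_q$ (the inner code) and $\mathcal{B}$ an $[n_2,k_2,d_2]$ linear code over $\mathbb{F}_{q^{k_1}}$ (the outer code). Let $\mathcal{C}$ be the serially concatenated code of length $n=n_1n_2$ and dimension $k=k_1k_2$ over $\mathbb{F}_q$, obtained by encoding a message with $\mathcal{B}$ and then encoding each of the $n_2$ outer code symbols (viewed as a vector in $\mathbb{F}_q^{k_1}$ via a fixed $\mathbb{F}_q$-linear identification) with $\mathcal{A}$. Then the minimum distance $d$ of $\mathcal{C}$ satisfies $$d\;\le\; n_1n_2-k_1k_2+1-\left(\left\lceil \frac{k_1k_2}{n_1-d_1+1}\right\rceil-1\right)(d_1-1).$$ *)

(* Defs.v *)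
From HB Require Import structures.
From mathcomp Require Import all_boot all_order all_algebra all_field.
Set Implicit Arguments. Unset Strict Implicit. Unset Printing Implicit Defensive.
Import Order.TTheory GRing.Theory Num.Theory.
Local Open Scope ring_scope.

Definition wt (R : nzRingType) (n : nat) (v : 'rV[R]_n) : nat :=
  #|[set i : 'I_n | v 0 i != 0]|.

Definition is_min_dist (R : nzRingType) (n : nat) (P : 'rV[R]_n -> Prop)
  (d : nat) : Prop :=
  (exists2 c, P c & c != 0 /\ wt c = d) /\
  (forall c, P c -> c != 0 -> (d <= wt c)%N).

Definition concat_word (F : fieldType) (K : fieldExtType F) (k1 n1 n2 : nat)
  (phi : K -> 'rV[F]_k1) (encA : 'rV[F]_k1 -> 'rV[F]_n1) (b : 'rV[K]_n2)
  : 'rV[F]_(n2 * n1) :=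
  mxvec (\matrix_(j < n2) encA (phi (b 0 j))).

Definition concat_code (F : fieldType) (K : fieldExtType F) (k1 n1 n2 : nat)
  (phi : K -> 'rV[F]_k1) (encA : 'rV[F]_k1 -> 'rV[F]_n1)
  (B : {vspace 'rV[K]_n2}) : 'rV[F]_(n2 * n1) -> Prop :=
  fun c => exists2 b, b \in B & c = concat_word phi encA b.

(* Main.v *)
Require Import Defs.
From HB Require Import structures.
From mathcomp Require Import all_boot all_order all_algebra all_field.
From mathcomp Require Import zify.
Import Order.TTheory GRing.Theory Num.Theory.
Local Open Scope ring_scope.

Lemma card_ltset n m : (m <= n)%N -> #|[set i : 'I_n | (i < m)%N]| = m.
Proof.
move=> h.
have -> : [set i : 'I_n | (i < m)%N] = [set widen_ord h i | i in 'I_m].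
  apply/setP => i; rewrite inE; apply/idP/imsetP.
    by move=> h1; exists (Ordinal h1) => //; apply: val_inj.
  by case=> j _ ->; rewrite /= ltn_ord.
rewrite card_imset ?card_ord // => a b /(congr1 val) /= e; exact: val_inj.
Qed.

Lemma card_geset n m : (m <= n)%N -> #|[set i : 'I_n | (m <= i)%N]| = (n - m)%N.
Proof.
move=> h; rewrite cardsCs card_ord.
have -> : ~: [set i : 'I_n | (m <= i)%N] = [set i : 'I_n | (i < m)%N].
  by apply/setP => i; rewrite !inE ltnNge.
by rewrite card_ltset.
Qed.

Lemma prefix_zero (F : fieldType) n1 d1 (A : {vspace 'rV[F]_n1})
  (distA : is_min_dist (fun c => c \in A) d1) (t : nat)
  (ht : (n1 - t < d1)%N) (ht' : (t <= n1)%N) (v : 'rV[F]_n1) :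
  v \in A -> (forall j : 'I_n1, (j < t)%N -> v 0 j = 0) -> v = 0.
Proof.
move=> vA vz; apply/eqP; apply/negPn/negP => nz.
have := distA.2 v vA nz.
have : (wt v <= #|[set i : 'I_n1 | (t <= i)%N]|)%N.
  rewrite /wt; apply: subset_leq_card; apply/subsetP => i; rewrite !inE.
  apply: contraR; rewrite -ltnNge => /vz ->; by rewrite eqxx.
rewrite card_geset //; lia.
Qed.

Definition Wm (F : fieldType) (K : fieldExtType F) k1 n1 n2
  (phi : K -> 'rV[F]_k1) (encA : 'rV[F]_k1 -> 'rV[F]_n1) (b : 'rV[K]_n2)
  : 'M[F]_(n2, n1) := \matrix_(j < n2) encA (phi (b 0 j)).
Arguments Wm {F K k1 n1 n2}.

Lemma WmB (F : fieldType) (K : fieldExtType F) k1 n1 n2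
  (phi : {linear K -> 'rV[F]_k1}) (encA : {linear 'rV[F]_k1 -> 'rV[F]_n1})
  (b b' : 'rV[K]_n2) : Wm phi encA (b - b') = Wm phi encA b - Wm phi encA b'.
Proof. by apply/matrixP => i j; rewrite !mxE !linearB /= !mxE. Qed.

Lemma Wm_inj (F : fieldType) (K : fieldExtType F) k1 n1 n2
  (phi : K -> 'rV[F]_k1) (encA : 'rV[F]_k1 -> 'rV[F]_n1)
  (phi_inj : injective phi) (encA_inj : injective encA) :
  injective (@Wm F K k1 n1 n2 phi encA).
Proof.
move=> b b' e; apply/rowP => j.
have := congr1 (row j) e; rewrite !rowK => /encA_inj /phi_inj.
done.
Qed.

Definition bmap (F : fieldType) (K : fieldExtType F) k1 n2 (g : 'rV[F]_k1 -> K)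
  (B : {vspace 'rV[K]_n2}) (u : 'M[F]_(\dim B, k1)) : 'rV[K]_n2 :=
  \sum_(i < \dim B) g (row i u) *: (vbasis B)`_i.
Arguments bmap {F K k1 n2}.

Lemma bmap_mem (F : fieldType) (K : fieldExtType F) k1 n2 (g : 'rV[F]_k1 -> K)
  (B : {vspace 'rV[K]_n2}) u : bmap g B u \in B.
Proof.
apply: memv_suml => i _; apply: memvZ; apply: vbasis_mem; apply: mem_nth.
by rewrite size_tuple.
Qed.

Lemma bmap_inj (F : fieldType) (K : fieldExtType F) k1 n2 (g : 'rV[F]_k1 -> K)
  (phi : K -> 'rV[F]_k1) (gphi : cancel g phi)
  (B : {vspace 'rV[K]_n2}) : injective (bmap g B).
Proof.
move=> u u' e.
have H0 : \sum_(i < \dim B) (g (row i u) - g (row i u')) *: (vbasis B)`_i = 0.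
  rewrite (eq_bigr (fun i => g (row i u) *: (vbasis B)`_i - g (row i u') *: (vbasis B)`_i)) => [|i _]; last by rewrite scalerBl.
  by rewrite sumrB; apply/eqP; rewrite subr_eq0; apply/eqP; exact: e.
move/freeP: (basis_free (vbasisP B)) => H.
apply/row_matrixP => i; have := H _ H0 i; move/eqP; rewrite subr_eq0 => /eqP /(congr1 phi).
by rewrite !gphi.
Qed.

Theorem mainTheorem9
  (F : finFieldType) (K : fieldExtType F)
  (n1 k1 d1 n2 k2 d2 : nat)
  (A : {vspace 'rV[F]_n1})
  (encA : {linear 'rV[F]_k1 -> 'rV[F]_n1})
  (encA_inj : injective encA)
  (encA_im : forall c, c \in A <-> exists u, c = encA u)
  (dimA : \dim A = k1)
  (distA : is_min_dist (fun c => c \in A) d1)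
  (phi : {linear K -> 'rV[F]_k1}) (phi_bij : bijective phi)
  (B : {vspace 'rV[K]_n2})
  (dimB : \dim B = k2)
  (distB : is_min_dist (fun c => c \in B) d2)
  (d : nat)
  (distC : is_min_dist (concat_code phi encA B) d) :
  (d%:Z <= (n1 * n2)%:Z - (k1 * k2)%:Z + 1
     - (Num.ceil ((k1 * k2)%:R / (n1 - d1 + 1)%:R : rat) - 1) * (d1%:Z - 1))%R.
Proof.
have q2 : (1 < #|F|)%N by apply: finNzRing_gt1.
have distA' := distA.
case: distA' => [[a0 a0A [a0nz wa0]] _].
have d1n1 : (d1 <= n1)%N.
  by rewrite -wa0 /wt; apply: leq_trans (max_card _) _; rewrite card_ord.
have d1pos : (0 < d1)%N.
  rewrite -wa0 lt0n /wt cards_eq0; move: a0nz; apply: contra => /eqP e.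
  apply/eqP/rowP => j; rewrite mxE; apply/eqP/negPn/negP => nz.
  have : j \in [set i | a0 0 i != 0] by rewrite inE.
  by rewrite e inE.
set t := (n1 - d1 + 1)%N.
have tn1 : (t <= n1)%N by rewrite /t; lia.
have Hpz := @prefix_zero _ _ _ _ distA t ltac:(rewrite /t; lia) tn1.
have k1t : (k1 <= t)%N.
  pose h (u : 'rV[F]_k1) : 'rV[F]_t := \row_(j < t) encA u 0 (widen_ord tn1 j).
  have hinj : injective h.
    move=> u u' huu; apply: encA_inj; apply/eqP; rewrite -subr_eq0; apply/eqP.
    rewrite -linearB; apply: Hpz; first by apply/encA_im; exists (u - u').
    move=> j jt; rewrite linearB /= mxE.
    have := congr1 (fun r : 'rV[F]_t => r 0 (Ordinal jt)) huu; rewrite !mxE.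
    have -> : widen_ord tn1 (Ordinal jt) = j by apply: val_inj.
    by move=> ->; rewrite subrr.
  by have := leq_card h hinj; rewrite !card_mx !mul1n leq_exp2l.
have k1pos : (0 < k1)%N.
  rewrite lt0n; apply/eqP => k10.
  have : phi 1 = phi 0 by move: (phi 1) (phi 0); rewrite k10 => x y; rewrite !thinmx0.
  by move/(bij_inj phi_bij)/eqP; rewrite oner_eq0.
subst k2.
case: phi_bij => g phig gphi.
have phi_inj : injective phi := can_inj phig.
have distC' := distC; case: distC' => [[c0 [b0 b0B ec0] [c0nz _]] distC2].
have dimBpos : (0 < \dim B)%N.
  rewrite lt0n dimv_eq0; apply/negP => /eqP B0; move: b0B; rewrite B0 memv0 => /eqP b00.
  move: c0nz; rewrite ec0 b00 /concat_word.
  have -> : (\matrix_(j < n2) encA (phi ((0 : 'rV[K]_n2) 0 j))) = 0.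
    by apply/matrixP => i j; rewrite !(mxE, linear0).
  by rewrite linear0 eqxx.
have dimBn2 : (\dim B <= n2)%N.
  by have := dimvS (subvf B); rewrite dimvf dim_matrix; lia.
set k := (k1 * \dim B)%N.
have kpos : (0 < k)%N by rewrite muln_gt0 k1pos.
have tpos : (0 < t)%N by rewrite /t addn1.
have [m hm] : exists m : nat, Num.ceil ((k%:R / t%:R) : rat) - 1 = m%:Z.
  have h0 : 0 <= Num.ceil ((k%:R / t%:R) : rat) - 1.
    have := ceil_gt0 ((k%:R / t%:R) : rat); rewrite divr_gt0 ?ltr0n //; lia.
  by exists `|Num.ceil ((k%:R / t%:R) : rat) - 1|%N; rewrite gez0_abs.
have mt : (m * t < k)%N.
  have := ceilB1_lt ((k%:R / t%:R) : rat); rewrite hm ltr_pdivlMr ?ltr0n //.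
  by rewrite -[(m%:Z)%:~R]/(m%:R) -natrM ltr_nat.
have mD : (m < \dim B)%N.
  have : (m * t < \dim B * t)%N.
    by apply: leq_trans mt _; rewrite /k mulnC leq_mul2l k1t orbT.
  by rewrite ltn_pmul2r.
have mn2 : (m <= n2)%N by lia.
set r0 := (k - 1 - m * t)%N.
have r0le : (r0 <= (n2 - m) * n1)%N.
  have h1 : (k - m * t <= k1 * (\dim B - m))%N.
    by rewrite /k mulnBr leq_sub2l // mulnC leq_mul2l k1t orbT.
  have h2 : (k1 * (\dim B - m) <= n1 * (n2 - m))%N by apply: leq_mul; lia.
  rewrite /r0 [((n2 - m) * n1)%N]mulnC; lia.
pose Dc := [set x : 'I_n2 * 'I_n1 | (x.1 < m)%N].
pose S1 := [set x : 'I_n2 * 'I_n1 | (x.1 < m)%N && (x.2 < t)%N].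
have cS1 : #|S1| = (m * t)%N.
  have -> : S1 = setX [set i : 'I_n2 | (i < m)%N] [set j : 'I_n1 | (j < t)%N].
    by apply/setP => -[i j]; rewrite !inE.
  by rewrite cardsX !card_ltset.
have cDc : #|Dc| = (m * n1)%N.
  have -> : Dc = setX [set i : 'I_n2 | (i < m)%N] [set: 'I_n1].
    by apply/setP => -[i j]; rewrite !inE andbT.
  by rewrite cardsX card_ltset // cardsT card_ord.
pose Ds := ~: Dc.
have cDs : #|Ds| = ((n2 - m) * n1)%N.
  by rewrite cardsCs setCK card_prod !card_ord cDc mulnBl.
pose E := [set x in take r0 (enum Ds)].
have cE : #|E| = r0.
  rewrite cardsE; move/card_uniqP: (take_uniq r0 (enum_uniq (mem Ds))) ->.
  by rewrite size_takel // -cardE cDs.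
have EDs : E \subset Ds.
  by apply/subsetP => x; rewrite inE => /mem_take; rewrite mem_enum.
pose S := S1 :|: E.
have cS : (#|S| <= k - 1)%N by rewrite cardsU cS1 cE; lia.
pose Z := Dc :|: E.
have cZ : #|Z| = (m * n1 + r0)%N.
  rewrite cardsU cDc cE.
  have -> : Dc :&: E = set0.
    apply/setP => x; rewrite !inE; apply/negbTE; apply/negP => /andP[xD xE].
    have xE' : x \in E by rewrite inE.
    by have := subsetP EDs x xE'; rewrite !inE xD.
  by rewrite cards0 subn0.
pose f (u : 'M[F]_(\dim B, k1)) : 'rV[F]_#|S| :=
  \row_(l < #|S|) Wm phi encA (bmap g B u) (enum_val l).1 (enum_val l).2.
have [u [u' [ne fuu]]] : exists u u', u != u' /\ f u = f u'.
  case: (boolP [exists u, exists u', (u != u') && (f u == f u')]).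
    by case/existsP => u /existsP [u' /andP [ne /eqP e]]; exists u, u'.
  move/existsPn => H; exfalso.
  have finj : injective f.
    move=> u u' e; apply/eqP; apply/negPn/negP => ne.
    by have := H u; move/existsPn/(_ u'); rewrite ne e eqxx.
  have := leq_card f finj; rewrite !card_mx leq_exp2l //; lia.
set bd := bmap g B u - bmap g B u'.
have bdB : bd \in B by apply: memvB; apply: bmap_mem.
set Dm := Wm phi encA bd.
have HD : Dm = Wm phi encA (bmap g B u) - Wm phi encA (bmap g B u').
  by rewrite /Dm /bd WmB.
have Dnz : Dm != 0.
  rewrite HD subr_eq0; apply: contra ne.
  by move=> /eqP /(@Wm_inj _ _ _ _ _ phi encA phi_inj encA_inj) /(@bmap_inj _ _ _ _ g phi gphi B) ->.
pose c := mxvec Dm.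
have cC : concat_code phi encA B c by exists bd.
have cnz : c != 0.
  apply: contra Dnz => /eqP cz; apply/eqP; apply: (can_inj mxvecK).
  by rewrite /c in cz; rewrite cz linear0.
have dle := distC2 c cC cnz.
have DS : forall x, x \in S -> Dm x.1 x.2 = 0.
  move=> x xS; have := congr1 (fun r : 'rV[F]_#|S| => r 0 (enum_rank_in xS x)) fuu.
  rewrite /f !mxE enum_rankK_in // => e.
  by rewrite !linearB /= !mxE e subrr.
have Drow : forall i : 'I_n2, (i < m)%N -> row i Dm = 0.
  move=> i im; rewrite /Dm /Wm rowK; apply: Hpz; first by apply/encA_im; eexists.
  move=> j jt; have := DS (i, j); rewrite /Dm /Wm mxE; apply.
  by rewrite !inE /= im jt.
have DZ : forall x, x \in Z -> Dm x.1 x.2 = 0.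
  move=> x; rewrite inE => /orP [xD | xE].
    rewrite inE in xD; have := congr1 (fun r : 'rV[F]_n1 => r 0 x.2) (Drow _ xD).
    by rewrite !mxE.
  by apply: DS; rewrite inE xE orbT.
have wtc : (wt c <= #|~: Z|)%N.
  rewrite /wt; apply: leq_trans (leq_imset_card (fun x : 'I_n2 * 'I_n1 => mxvec_index x.1 x.2) (~: Z)).
  apply: subset_leq_card; apply/subsetP => l; rewrite inE.
  case/mxvec_indexP: l => i j; rewrite /c mxvecE => nz; apply/imsetP; exists (i, j) => //.
  by rewrite inE; apply: contra nz => /DZ /= ->; rewrite eqxx.
have cZc : #|~: Z| = (n2 * n1 - (m * n1 + r0))%N.
  by rewrite cardsCs setCK card_prod !card_ord cZ.
rewrite hm.
have td : (t + d1 = n1 + 1)%N by rewrite /t; lia.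
have ht : (m * t + m * d1 = m * n1 + m)%N by rewrite -mulnDr td mulnDr muln1.
rewrite /r0 /k in cZc mt ht *.
lia.
Qed.
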